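(* Let $A=\mathrm{Diag}(a_1,a_2,a_3,a_4)$, $B=\mathrm{Diag}(b_1,b_2,b_3,b_4)$, $C=\mathrm{Diag}(c_1,c_2,c_3,c_4)$ be traceless real diagonal matrices. Then for the $G_2$-structure $(G_{A,B,C},\varphi)$, with $\psi=*\varphi$, $$\Delta\varphi=\big((a_1+a_2)^2+(b_1+b_2)^2+(c_1+c_2)^2\big)\omega_7\wedge e^7+\big((a_1+a_3)^2+(b_1+b_3)^2+(c_1+c_3)^2\big)\omega_1\wedge e^1+\big((a_1+a_4)^2+(b_1+b_4)^2+(c_1+c_4)^2\big)\omega_2\wedge e^2,$$ $$\Delta\psi=\big((a_1+a_2)^2+(b_1+b_2)^2+(c_1+c_2)^2\big)\omega_7\wedge e^{12}+\big((a_1+a_3)^2+(b_1+b_3)^2+(c_1+c_3)^2\big)\omega_1\wedge e^{27}-\big((a_1+a_4)^2+(b_1+b_4)^2+(c_1+c_4)^2\big)\omega_2\wedge e^{17}.$$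
   Context: For commuting $A,B,C\in\mathfrak{sl}_4(\mathbb R)$, $\mathfrak g_{A,B,C}$ is the Lie algebra with basis $\{e_1,\dots,e_7\}$ in which $\langle e_7,e_1,e_2\rangle$ is an abelian subalgebra, $\mathfrak n=\langle e_3,\dots,e_6\rangle$ is an abelian ideal, and in the basis $\{e_3,\dots,e_6\}$, $\mathrm{ad}\,e_7|_{\mathfrak n}=A$, $\mathrm{ad}\,e_1|_{\mathfrak n}=B$, $\mathrm{ad}\,e_2|_{\mathfrak n}=C$; $G_{A,B,C}$ is the simply connected Lie group with this Lie algebra, with left-invariant positive 3-form $\varphi=e^{127}+e^{347}+e^{567}+e^{135}-e^{146}-e^{236}-e^{245}$ ($\{e^i\}$ dual basis, $e^{ij}=e^i\wedge e^j$). The induced metric makes $\{e_1,\dots,e_7\}$ oriented orthonormal; $*$ is its Hodge star and $\Delta=dd^*+d^*d$ the Hodge Laplacian on left-invariant forms. Also $\omega_7=e^{34}+e^{56}$, $\omega_1=e^{35}-e^{46}$, $\omega_2=-e^{36}-e^{45}$. *)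

(* Defs.v *)
(* Left-invariant forms on the 7-dimensional Lie group
   G_{A,B,C}, represented by their coefficients in the dual basis e^1..e^7.
   Paper index n (1..7) corresponds to the ordinal n-1 : 'I_7. *)
From HB Require Import structures.
From mathcomp Require Import all_boot all_order all_algebra.
Set Implicit Arguments. Unset Strict Implicit. Unset Printing Implicit Defensive.
Import Order.TTheory GRing.Theory Num.Theory.
Local Open Scope ring_scope.

Notation form R := {ffun {set 'I_7} -> R} (only parsing).

Section Forms.
Variable R : realFieldType.

Definition shsign (I J : {set 'I_7}) : R :=
  (-1) ^+ #|[set p : 'I_7 * 'I_7 | (p.1 \in I) && (p.2 \in J) && (p.2 < p.1)%N]|.

Definition eb (n : nat) : form R := [ffun S : {set 'I_7} => ((S == [set (inord n.-1 : 'I_7)]) : nat)%:R].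

Definition wedge (a b : form R) : form R :=
  [ffun S : {set 'I_7} => \sum_(I : {set 'I_7} | I \subset S) shsign I (S :\: I) * a I * b (S :\: I)].

(* Hodge star of the metric making e_1..e_7 oriented orthonormal:
   * e^I = shsign I I^c e^{I^c} *)
Definition hodge (a : form R) : form R := [ffun J : {set 'I_7} => shsign (~: J) J * a (~: J)].

Fixpoint inversions (s : seq 'I_7) : nat :=
  if s is x :: t then (count (fun y : 'I_7 => (y < x)%N) t + inversions t)%N else 0%N.

(* alpha(e_{s_0}, ..., e_{s_p}) for a sequence of basis vectors *)
Definition evalf (a : form R) (s : seq 'I_7) : R :=
  if uniq s then (-1) ^+ inversions s * a [set x in s] else 0.

Definition drop2 (s : seq 'I_7) (i j : nat) : seq 'I_7 :=
  [seq nth ord0 s k | k <- iota 0 (size s) & (k != i) && (k != j)].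

(* exterior derivative of left-invariant forms for a Lie algebra with
   structure constants c: [e_a, e_b] = sum_k c k a b e_k, via
   d alpha (X_0..X_p) = sum_{i<j} (-1)^{i+j} alpha([X_i,X_j], X_0,..^i..^j..,X_p) *)
Definition dext (c : 'I_7 -> 'I_7 -> 'I_7 -> R) (a : form R) : form R :=
  [ffun S : {set 'I_7} => let s := enum S in
     \sum_(i < #|S|) \sum_(j < #|S| | (i < j)%N)
        (-1) ^+ (i + j) *
        \sum_(k : 'I_7) c k (nth ord0 s i) (nth ord0 s j) * evalf a (k :: drop2 s i j)].

(* codifferential: on k-forms in dimension 7, d^* = (-1)^k * d * *)
Definition dstar c (a : form R) : form R :=
  [ffun J : {set 'I_7} => (-1) ^+ (#|J| + 1) * hodge (dext c (hodge a)) J].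

Definition laplacian c (a : form R) : form R := dext c (dstar c a) + dstar c (dext c a).

(* the Lie algebra g_{A,B,C}: ad e_7, ad e_1, ad e_2 act on n = <e_3..e_6>
   by A, B, C (columns = images of e_3..e_6); all other brackets of basis
   elements vanish. *)
Definition nidx (i : 'I_7) : option 'I_4 :=
  if (2 <= i <= 5)%N then Some (inord (i - 2)) else None.

Definition admat (A B C : 'M[R]_4) (i : 'I_7) : option 'M[R]_4 :=
  if val i == 6%N then Some A else if val i == 0%N then Some B
  else if val i == 1%N then Some C else None.

Definition structc (A B C : 'M[R]_4) (k a b : 'I_7) : R :=
  match admat A B C a, nidx b, nidx k with
  | Some M, Some j, Some i => M i j
  | _, _, _ =>
    match admat A B C b, nidx a, nidx k with
    | Some M, Some j, Some i => - M i j
    | _, _, _ => 0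
    end
  end.

Definition fscale (k : R) (f : form R) : form R := [ffun S : {set 'I_7} => k * f S].

Definition w2 (i j : nat) : form R := wedge (eb i) (eb j).
Definition w3 (i j k : nat) : form R := wedge (eb i) (wedge (eb j) (eb k)).

Definition G2phi : form R :=
  w3 1 2 7 + w3 3 4 7 + w3 5 6 7 + w3 1 3 5 - w3 1 4 6 - w3 2 3 6 - w3 2 4 5.
Definition G2psi : form R := hodge G2phi.

Definition omega7 : form R := w2 3 4 + w2 5 6.
Definition omega1 : form R := w2 3 5 - w2 4 6.
Definition omega2 : form R := - w2 3 6 - w2 4 5.

End Forms.

(* Main.v *)
Require Import Defs.
From mathcomp Require Import all_boot all_order all_algebra.
Set Implicit Arguments. Unset Strict Implicit. Unset Printing Implicit Defensive.
Import Order.TTheory GRing.Theory Num.Theory.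
Local Open Scope ring_scope.

Definition mono := seq nat.
Definition trm := (mono * int)%type.
Definition pl := seq trm.

Fixpoint mlt (m1 m2 : seq nat) : bool :=
  match m1, m2 with
  | [::], [::] => false
  | [::], _ => true
  | _, [::] => false
  | a :: m1', b :: m2' => (a < b)%N || ((a == b) && mlt m1' m2')
  end.

Fixpoint ins (t : trm) (q : pl) : pl :=
  match q with
  | [::] => if t.2 == 0 then [::] else [:: t]
  | u :: q' =>
    if t.1 == u.1 then (if t.2 + u.2 == 0 then q' else (t.1, t.2 + u.2) :: q')
    else if mlt t.1 u.1 then (if t.2 == 0 then q else t :: q)
    else u :: ins t q'
  end.

Definition padd (p q : pl) : pl := foldr ins q p.
Definition popp (p : pl) : pl := [seq (t.1, - t.2) | t <- p].
Definition mmul (m1 m2 : mono) : mono := sort leq (m1 ++ m2).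
Definition pmul (p q : pl) : pl :=
  foldr (fun t acc => foldr (fun u acc' => ins (mmul t.1 u.1, t.2 * u.2) acc') acc q) [::] p.
Definition pone : pl := [:: ([::], 1)].
Definition pvar (i : nat) : pl := [:: ([:: i], 1)].
Definition psgn (n : nat) (p : pl) : pl := if odd n then popp p else p.
Definition sumP {A} (l : seq A) (f : A -> pl) : pl :=
  foldr (fun y acc => padd (f y) acc) [::] l.

Inductive tree := Lf of pl | Nd of tree & tree.
Fixpoint build (d : nat) (f : seq bool -> pl) : tree :=
  if d is d'.+1 then Nd (build d' (fun l => f (false :: l))) (build d' (fun l => f (true :: l)))
  else Lf (f [::]).
Fixpoint lookup (t : tree) (bs : seq bool) : pl :=
  match t, bs with
  | Lf p, _ => p
  | Nd l r, b :: bs' => lookup (if b then r else l) bs'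
  | Nd _ _, [::] => [::]
  end.

Definition zvec (f : nat -> bool) : seq bool := [seq f i | i <- iota 0 7].
Definition zelems (bs : seq bool) : seq nat := [seq i <- iota 0 7 | nth false bs i].
Definition zmemv (l : seq nat) := zvec (fun i => i \in l).
Definition znegv (bs : seq bool) := zvec (fun i => ~~ nth false bs i).
Definition zdiffv (bs ib : seq bool) := zvec (fun i => nth false bs i && ~~ nth false ib i).
Definition zsubv (ib bs : seq bool) := all (fun i => nth false ib i ==> nth false bs i) (iota 0 7).
Definition shN (ib jb : seq bool) : nat :=
  sumn [seq count (fun j => nth false ib i && nth false jb j && (j < i)%N) (iota 0 7) | i <- iota 0 7].
Fixpoint invN (s : seq nat) : nat :=
  if s is y :: t then (count (fun z => (z < y)%N) t + invN t)%N else 0%N.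
Definition drop2N (l : seq nat) (i j : nat) : seq nat :=
  [seq nth 0%N l k | k <- iota 0 (size l) & (k != i) && (k != j)].
Definition evalfT (t : tree) (l : seq nat) : pl :=
  if uniq l then psgn (invN l) (lookup t (zmemv l)) else [::].

Fixpoint zallvn (n : nat) : seq (seq bool) :=
  if n is n'.+1 then [seq b :: l | b <- [:: false; true], l <- zallvn n'] else [:: [::]].
Definition zallv := zallvn 7.

Definition ebT (n : nat) : tree := build 7 (fun bs => if bs == zmemv [:: n.-1] then pone else [::]).
Definition addT (t1 t2 : tree) : tree := build 7 (fun bs => padd (lookup t1 bs) (lookup t2 bs)).
Definition oppT (t : tree) : tree := build 7 (fun bs => popp (lookup t bs)).
Definition subT (t1 t2 : tree) : tree := addT t1 (oppT t2).
Definition fscT (p : pl) (t : tree) : tree := build 7 (fun bs => pmul p (lookup t bs)).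
Definition hodgeT (t : tree) : tree :=
  build 7 (fun bs => psgn (shN (znegv bs) bs) (lookup t (znegv bs))).
Definition wedgeT (ta tb : tree) : tree :=
  build 7 (fun bs => sumP [seq ib <- zallv | zsubv ib bs]
     (fun ib => psgn (shN ib (zdiffv bs ib)) (pmul (lookup ta ib) (lookup tb (zdiffv bs ib))))).
Definition dextAt (cP : nat -> nat -> nat -> pl) (t : tree) (bs : seq bool) : pl :=
  let s := zelems bs in let n := size s in
  sumP (iota 0 n) (fun i => sumP [seq j <- iota 0 n | (i < j)%N] (fun j =>
    psgn (i + j) (sumP (iota 0 7) (fun k =>
       pmul (cP k (nth 0%N s i) (nth 0%N s j)) (evalfT t (k :: drop2N s i j)))))).
Definition dextT cP t : tree := build 7 (dextAt cP t).
Definition dstarT cP t : tree :=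
  let u := hodgeT (dextT cP (hodgeT t)) in
  build 7 (fun bs => psgn (count id bs + 1) (lookup u bs)).
Definition lapT cP t : tree := addT (dextT cP (dstarT cP t)) (dstarT cP (dextT cP t)).

Definition w2T i j := wedgeT (ebT i) (ebT j).
Definition w3T i j k := wedgeT (ebT i) (wedgeT (ebT j) (ebT k)).
Definition phiT : tree :=
  subT (subT (subT (addT (addT (addT (w3T 1 2 7) (w3T 3 4 7)) (w3T 5 6 7)) (w3T 1 3 5))
    (w3T 1 4 6)) (w3T 2 3 6)) (w3T 2 4 5).
Definition psiT : tree := hodgeT phiT.
Definition om7T := addT (w2T 3 4) (w2T 5 6).
Definition om1T := subT (w2T 3 5) (w2T 4 6).
Definition om2T := subT (oppT (w2T 3 6)) (w2T 4 5).

Definition admN (p : nat) : option nat :=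
  if p == 6%N then Some 0%N else if p == 0%N then Some 1%N else if p == 1%N then Some 2%N else None.
Definition nidN (i : nat) : option nat := if (2 <= i <= 5)%N then Some (i - 2)%N else None.
Definition entP (m i : nat) : pl :=
  if (i < 3)%N then pvar (3 * m + i) else popp (padd (pvar (3 * m)) (padd (pvar (3 * m + 1)) (pvar (3 * m + 2)))).
Definition cP (k p q : nat) : pl :=
  match admN p, nidN q, nidN k with
  | Some m, Some j, Some i => if i == j then entP m i else [::]
  | _, _, _ =>
    match admN q, nidN p, nidN k with
    | Some m, Some j, Some i => if i == j then popp (entP m i) else [::]
    | _, _, _ => [::]
    end
  end.
Definition sqP p := pmul p p.
Definition lamP (n : nat) : pl :=
  padd (padd (sqP (padd (entP 0 0) (entP 0 n))) (sqP (padd (entP 1 0) (entP 1 n))))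
       (sqP (padd (entP 2 0) (entP 2 n))).

Definition rhs1T := addT (addT (fscT (lamP 1) (wedgeT om7T (ebT 7))) (fscT (lamP 2) (wedgeT om1T (ebT 1))))
   (fscT (lamP 3) (wedgeT om2T (ebT 2))).
Definition rhs2T := subT (addT (fscT (lamP 1) (wedgeT om7T (w2T 1 2))) (fscT (lamP 2) (wedgeT om1T (w2T 2 7))))
   (fscT (lamP 3) (wedgeT om2T (w2T 1 7))).

Definition treeEq (t1 t2 : tree) : bool :=
  all (fun bs => padd (lookup t1 bs) (popp (lookup t2 bs)) == [::]) zallv.
Section Ev.
Variable R : comNzRingType.
Variable x : nat -> R.
Definition evm (m : mono) : R := \prod_(i <- m) x i.
Definition evt (t : trm) : R := t.2%:~R * evm t.1.
Definition ev (p : pl) : R := \sum_(t <- p) evt t.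

Lemma ev_nil : ev [::] = 0. Proof. by rewrite /ev big_nil. Qed.
Lemma ev_cons t p : ev (t :: p) = evt t + ev p. Proof. by rewrite /ev big_cons. Qed.

Lemma ev_ins t q : ev (ins t q) = evt t + ev q.
Proof.
case: t => m c.
elim: q => [|[m' c'] q IH] /=.
  have [->|_] := eqVneq c 0; first by rewrite /evt mul0r ev_nil addr0.
  by rewrite ev_cons ev_nil.
have [E|_] := eqVneq m m'.
  have Ht : evt (m, c) + evt (m', c') = (c + c')%:~R * evm m by rewrite /evt E intrD mulrDl.
  have [S|_] := eqVneq (c + c') 0.
    by rewrite ev_cons addrA Ht S mul0r add0r.
  by rewrite !ev_cons addrA Ht.
case: ifP => _.
  have [->|_] := eqVneq c 0; first by rewrite /evt mul0r add0r.
  by rewrite ev_cons.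
by rewrite !ev_cons IH addrCA.
Qed.

Lemma ev_padd p q : ev (padd p q) = ev p + ev q.
Proof. by elim: p => [|t p IH] /=; rewrite ?ev_nil ?add0r // ev_ins IH ev_cons addrA. Qed.

Lemma ev_popp p : ev (popp p) = - ev p.
Proof.
elim: p => [|t p IH] /=; first by rewrite ev_nil oppr0.
by rewrite !ev_cons IH opprD /evt /= intrN mulNr.
Qed.

Lemma evm_mmul m1 m2 : evm (mmul m1 m2) = evm m1 * evm m2.
Proof. by rewrite /evm /mmul (perm_big _ (permEl (perm_sort _ _))) big_cat. Qed.

Lemma ev_inner t q acc : ev (foldr (fun u acc' => ins (mmul t.1 u.1, t.2 * u.2) acc') acc q)
   = evt t * ev q + ev acc.
Proof.
elim: q => [|u q IHq] /=; first by rewrite ev_nil mulr0 add0r.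
rewrite ev_ins IHq ev_cons mulrDr addrA; congr (_ + _ + _).
by rewrite /evt /= evm_mmul intrM mulrACA.
Qed.

Lemma ev_pmul p q : ev (pmul p q) = ev p * ev q.
Proof.
elim: p => [|t p IH] /=; first by rewrite !ev_nil mul0r.
by rewrite ev_inner IH ev_cons mulrDl.
Qed.

Lemma ev_pone : ev pone = 1.
Proof. by rewrite ev_cons ev_nil /evt /evm big_nil mulr1 addr0. Qed.
Lemma ev_pvar i : ev (pvar i) = x i.
Proof. by rewrite ev_cons ev_nil /evt /evm big_seq1 mul1r addr0. Qed.
Lemma ev_psgn n p : ev (psgn n p) = (-1) ^+ n * ev p.
Proof. by rewrite /psgn -signr_odd; case: (odd n); rewrite ?ev_popp ?expr1 ?expr0 ?mulN1r ?mul1r. Qed.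
Lemma ev_sumP A (l : seq A) f : ev (sumP l f) = \sum_(y <- l) ev (f y).
Proof. by elim: l => [|y l IH] /=; rewrite ?ev_nil ?big_nil // ev_padd IH big_cons. Qed.
End Ev.

Lemma lookup_build d f bs : size bs = d -> lookup (build d f) bs = f bs.
Proof.
elim: d f bs => [|d IH] f [|b bs] //= [E].
by case: b; rewrite IH.
Qed.
Definition memS (S : {set 'I_7}) : seq bool := [seq i \in S | i <- enum 'I_7].
Definition setv (bs : seq bool) : {set 'I_7} := [set i : 'I_7 | nth false bs i].

Lemma enumS (S : {set 'I_7}) : enum S = [seq i <- enum 'I_7 | i \in S].
Proof.
rewrite -!deprecated_filter_index_enum -filter_predI; apply: eq_filter => i.
exact: (esym (andbT _)).
Qed.


Lemma size_memS (S : {set 'I_7}) : size (memS S) = 7%N.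
Proof. by rewrite size_map size_enum_ord. Qed.

Lemma memS_nth (S : {set 'I_7}) (i : 'I_7) : nth false (memS S) i = (i \in S).
Proof. by rewrite (nth_map ord0) ?size_enum_ord ?ltn_ord // nth_ord_enum. Qed.

Lemma zvecE (f : nat -> bool) : zvec f = [seq f (val i) | i <- enum 'I_7].
Proof. by rewrite /zvec -val_enum_ord -map_comp. Qed.

Lemma nth_zvec (f : nat -> bool) n : (n < 7)%N -> nth false (zvec f) n = f n.
Proof. by move=> Hn; rewrite /zvec (nth_map 0%N) ?size_iota // nth_iota. Qed.

Lemma memS_zvec (S : {set 'I_7}) (f : nat -> bool) : (forall i : 'I_7, (i \in S) = f i) -> memS S = zvec f.
Proof. by move=> H; rewrite zvecE; apply: eq_map => i. Qed.

Lemma memS_inj : injective memS.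
Proof.
move=> S1 S2 E; apply/setP => i; by rewrite -!memS_nth E.
Qed.

Lemma elems_memS (S : {set 'I_7}) : zelems (memS S) = map val (enum S).
Proof.
rewrite /zelems -val_enum_ord filter_map enumS; congr map.
by apply: eq_filter => i /=; rewrite memS_nth.
Qed.

Lemma memS_setC (S : {set 'I_7}) : memS (~: S) = znegv (memS S).
Proof. by apply: memS_zvec => i; rewrite inE memS_nth. Qed.

Lemma memS_setD (S I : {set 'I_7}) : memS (S :\: I) = zdiffv (memS S) (memS I).
Proof. by apply: memS_zvec => i; rewrite !inE !memS_nth andbC. Qed.

Lemma memS_seq (s : seq 'I_7) : memS [set x in s] = zmemv (map val s).
Proof. by apply: memS_zvec => i; rewrite inE (mem_map val_inj). Qed.

Lemma memS_set1 m : (m < 7)%N -> memS [set (inord m : 'I_7)] = zmemv [:: m].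
Proof.
move=> Hm; apply: memS_zvec => i; rewrite !inE.
apply/eqP/eqP => [->|E]; first by rewrite inordK.
by apply: val_inj; rewrite /= inordK.
Qed.

Lemma memS_subset (I S : {set 'I_7}) : (I \subset S) = zsubv (memS I) (memS S).
Proof.
rewrite /zsubv -val_enum_ord all_map; apply/subsetP/allP => H i.
  by move=> _; rewrite /= !memS_nth; apply/implyP/H.
by move=> Hi; have := H i (mem_enum _ i); rewrite /= !memS_nth => /implyP; apply.
Qed.

Lemma card_memS (S : {set 'I_7}) : #|S| = count id (memS S).
Proof.
rewrite cardE -(size_map val) -elems_memS /zelems size_filter.
rewrite /memS count_map -val_enum_ord count_map; apply: eq_count => i /=.
by rewrite memS_nth.
Qed.

Lemma big_ord_iota (T : Type) (idx : T) (op : Monoid.com_law idx) n (F : nat -> T) :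
  \big[op/idx]_(i < n) F i = \big[op/idx]_(i <- iota 0 n) F i.
Proof. by have := @big_mkord _ idx op n xpredT F; rewrite /index_iota subn0 => <-. Qed.

Lemma count_sumn (T : Type) (a : pred T) (l : seq T) : count a l = (\sum_(y <- l) (a y : nat))%N.
Proof. by rewrite -sum1_count big_mkcond. Qed.

Lemma shsign_memS (R : realFieldType) (I J : {set 'I_7}) : shsign R I J = (-1) ^+ shN (memS I) (memS J).
Proof.
rewrite /shsign; congr (_ ^+ _).
rewrite -sum1_card.
rewrite (eq_bigl (fun p : 'I_7 * 'I_7 => (p.1 \in I) && (p.2 \in J) && (p.2 < p.1)%N)); last first.
  by move=> p; rewrite inE.
rewrite big_mkcond /=.
rewrite -(pair_big xpredT xpredT (fun i j : 'I_7 => if (i \in I) && (j \in J) && (j < i)%N then 1%N else 0%N)) /=.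
rewrite /shN sumnE big_map.
rewrite (eq_bigr (fun i : 'I_7 => \sum_(j < 7) (if nth false (memS I) i && nth false (memS J) j && (j < i)%N then 1%N else 0%N))%N); last first.
  by move=> i _; apply: eq_bigr => j _; rewrite !memS_nth.
rewrite (big_ord_iota _ _ (fun i => \sum_(j < 7) (if nth false (memS I) i && nth false (memS J) j && (j < i)%N then 1%N else 0%N))%N).
apply: eq_bigr => i _; rewrite count_sumn (big_ord_iota _ _ (fun j => if nth false (memS I) i && nth false (memS J) j && (j < i)%N then 1%N else 0%N)).
by apply: eq_bigr => j _; case: ifP.
Qed.

Lemma memS_setv bs : size bs = 7%N -> memS (setv bs) = bs.
Proof.
move=> Hs; apply: (@eq_from_nth _ false); first by rewrite size_memS Hs.
move=> n; rewrite size_memS => Hn.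
by rewrite -[n]/(val (Ordinal Hn)) memS_nth inE.
Qed.

Lemma zallvnS n : zallvn n.+1 = [seq b :: l | b <- [:: false; true], l <- zallvn n].
Proof. by []. Qed.

Lemma zallv_size bs : bs \in zallv -> size bs = 7%N.
Proof.
rewrite /zallv; elim: 7%N bs => [|n IH] bs; first by rewrite inE => /eqP ->.
by rewrite zallvnS; case/allpairsP => [[b l] [_ Hl ->]] /=; rewrite (IH _ Hl).
Qed.

Lemma size_zallv bs : size bs = 7%N -> bs \in zallv.
Proof.
rewrite /zallv; elim: 7%N bs => [|n IH] bs; first by case: bs.
rewrite zallvnS; case: bs => [//|b bs] [Hs]; apply: (allpairs_f (fun b l => b :: l)); first by case: b.
exact: IH.
Qed.

Lemma uniq_zallv : uniq zallv.
Proof. by vm_compute. Qed.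

Lemma setv_memS (I : {set 'I_7}) : setv (memS I) = I.
Proof. by apply/setP => i; rewrite inE memS_nth. Qed.

Lemma big_ord_iotaP (T : Type) (idx : T) (op : Monoid.com_law idx) n (P : pred nat) (F : nat -> T) :
  \big[op/idx]_(i < n | P i) F i = \big[op/idx]_(i <- iota 0 n | P i) F i.
Proof. by have := @big_mkord _ idx op n P F; rewrite /index_iota subn0 => <-. Qed.

Lemma invN_map (s : seq 'I_7) : inversions s = invN (map val s).
Proof. by elim: s => //= y t ->; rewrite count_map. Qed.

Lemma drop2_map (s : seq 'I_7) i j : map val (drop2 s i j) = drop2N (map val s) i j.
Proof.
rewrite /drop2 /drop2N size_map -map_comp; apply/eq_in_map => k.
rewrite mem_filter mem_iota add0n => /andP [_ Hk] /=.
by rewrite (nth_map ord0).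
Qed.

Section Rep.
Variable R : realFieldType.
Variable x : nat -> R.
Local Notation ev := (ev x).

Definition rep (t : tree) (a : {ffun {set 'I_7} -> R}) := forall S, a S = ev (lookup t (memS S)).

Lemma lk_build f S : lookup (build 7 f) (memS S) = f (memS S).
Proof. exact: lookup_build (size_memS S). Qed.

Lemma big_sets (G : {set 'I_7} -> R) (P : pred {set 'I_7}) :
  \sum_(I | P I) G I = \sum_(bs <- zallv | P (setv bs)) G (setv bs).
Proof.
rewrite -(big_map setv P G) big_mkcond [RHS]big_mkcond [RHS]big_uniq; last first.
  rewrite map_inj_in_uniq ?uniq_zallv // => b1 b2 H1 H2 E.
  by rewrite -(memS_setv (zallv_size H1)) E memS_setv // zallv_size.
apply: eq_bigl => I; symmetry; apply/mapP; exists (memS I); last by rewrite setv_memS.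
by rewrite size_zallv // size_memS.
Qed.

Lemma rep_add t1 t2 a b : rep t1 a -> rep t2 b -> rep (addT t1 t2) (a + b).
Proof. by move=> Ha Hb S; rewrite /addT lk_build ev_padd -Ha -Hb ffunE. Qed.

Lemma rep_opp t a : rep t a -> rep (oppT t) (- a).
Proof. by move=> Ha S; rewrite /oppT lk_build ev_popp -Ha ffunE. Qed.

Lemma rep_sub t1 t2 a b : rep t1 a -> rep t2 b -> rep (subT t1 t2) (a - b).
Proof. by move=> Ha Hb; apply: rep_add => //; apply: rep_opp. Qed.

Lemma rep_fsc p k t a : k = ev p -> rep t a -> rep (fscT p t) (fscale k a).
Proof. by move=> -> Ha S; rewrite /fscT lk_build ev_pmul -Ha ffunE. Qed.

Lemma rep_eb n : (0 < n <= 7)%N -> rep (ebT n) (eb R n).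
Proof.
move=> /andP [H0 H7] S; rewrite /ebT lk_build ffunE.
rewrite -(inj_eq memS_inj) memS_set1; last by case: n H0 H7.
by case: eqP => _; rewrite ?ev_pone ?ev_nil.
Qed.

Lemma rep_hodge t a : rep t a -> rep (hodgeT t) (hodge a).
Proof.
move=> Ha S; rewrite /hodgeT lk_build ffunE ev_psgn shsign_memS Ha memS_setC.
by [].
Qed.

Lemma rep_wedge ta tb a b : rep ta a -> rep tb b -> rep (wedgeT ta tb) (wedge a b).
Proof.
move=> Ha Hb S; rewrite /wedgeT lk_build ffunE ev_sumP big_filter big_sets.
rewrite big_seq_cond [RHS]big_seq_cond; apply: eq_big => bs.
  case Hbs: (bs \in zallv) => //=.
  by rewrite memS_subset memS_setv // zallv_size.
move=> /andP [Hbs _].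
have Hs := zallv_size Hbs.
rewrite ev_psgn ev_pmul shsign_memS Ha Hb memS_setD !memS_setv //.
by rewrite mulrA.
Qed.

Lemma evalfE t a (s : seq 'I_7) : rep t a -> evalf a s = ev (evalfT t (map val s)).
Proof.
move=> Ha; rewrite /evalf /evalfT (map_inj_uniq val_inj) invN_map.
case: ifP => _; last by rewrite ev_nil.
by rewrite ev_psgn Ha memS_seq.
Qed.

Lemma rep_dext c (cp : nat -> nat -> nat -> pl) t a : (forall k p q : 'I_7, c k p q = ev (cp k p q)) ->
  rep t a -> rep (dextT cp t) (dext c a).
Proof.
move=> Hc Ha S; rewrite /dextT lk_build ffunE /dextAt elems_memS.
set s := enum S.
rewrite cardE -/s size_map ev_sumP -big_ord_iota; apply: eq_bigr => i _.
rewrite ev_sumP big_filter -big_ord_iotaP; apply: eq_bigr => j _.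
rewrite ev_psgn ev_sumP -big_ord_iota; congr (_ * _); apply: eq_bigr => k _.
rewrite ev_pmul Hc (evalfE (k :: drop2 s i j) Ha) /= drop2_map.
by rewrite !(nth_map ord0) ?ltn_ord.
Qed.

Lemma rep_dstar c (cp : nat -> nat -> nat -> pl) t a : (forall k p q : 'I_7, c k p q = ev (cp k p q)) ->
  rep t a -> rep (dstarT cp t) (dstar c a).
Proof.
move=> Hc Ha S; rewrite /dstarT lk_build ffunE ev_psgn card_memS.
congr (_ * _); apply: rep_hodge; apply: rep_dext => //; exact: rep_hodge.
Qed.

Lemma rep_lap c (cp : nat -> nat -> nat -> pl) t a : (forall k p q : 'I_7, c k p q = ev (cp k p q)) ->
  rep t a -> rep (lapT cp t) (laplacian c a).
Proof.
move=> Hc Ha; apply: rep_add.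
  by apply: rep_dext => //; apply: rep_dstar.
by apply: rep_dstar => //; apply: rep_dext.
Qed.

End Rep.

Lemma check1 : treeEq (lapT cP phiT) rhs1T.
Proof. by vm_compute. Qed.
Lemma check2 : treeEq (lapT cP psiT) rhs2T.
Proof. by vm_compute. Qed.

Section Final.
Variable R : realFieldType.
Variables (a b c : 'rV[R]_4).
Hypotheses (Ha : \tr (diag_mx a) = 0) (Hb : \tr (diag_mx b) = 0) (Hc : \tr (diag_mx c) = 0).

Definition vof (m : nat) : 'rV[R]_4 := if m == 0%N then a else if m == 1%N then b else c.
Definition xv (i : nat) : R := vof (i %/ 3) 0 (inord (i %% 3)).
Local Notation ev := (ev xv).

Lemma treeEq_ok t1 t2 : treeEq t1 t2 -> forall S, ev (lookup t1 (memS S)) = ev (lookup t2 (memS S)).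
Proof.
move=> /allP H S; have /eqP := H _ (size_zallv (size_memS S)).
move/(congr1 ev); rewrite ev_padd ev_popp ev_nil => /eqP.
by rewrite subr_eq0 => /eqP.
Qed.

Lemma sum4 (f : 'I_4 -> R) : \sum_j f j = f (inord 0) + f (inord 1) + f (inord 2) + f (inord 3).
Proof.
rewrite !big_ord_recr big_ord0 /= GRing.add0r.
by congr (_ + _ + _ + _); congr f; apply: val_inj; rewrite /= inordK.
Qed.

Lemma vof3 m : (m < 3)%N -> vof m 0 (inord 3) = - (vof m 0 (inord 0) + (vof m 0 (inord 1) + vof m 0 (inord 2))).
Proof.
move=> Hm.
have : \tr (diag_mx (vof m)) = 0 by rewrite /vof; case: ifP => _; last case: ifP => _.
rewrite mxtrace_diag sum4 => /eqP; rewrite addrC addr_eq0 => /eqP ->.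
by rewrite addrA.
Qed.

Lemma ent_ok m i : (m < 3)%N -> (i < 4)%N -> ev (entP m i) = vof m 0 (inord i).
Proof.
move=> Hm Hi; rewrite /entP.
have xvE : forall j, (j < 3)%N -> xv (3 * m + j) = vof m 0 (inord j).
  move=> j Hj; rewrite /xv.
  have -> : ((3 * m + j) %/ 3 = m)%N by rewrite mulnC divnMDl // divn_small // addn0.
  by have -> : ((3 * m + j) %% 3 = j)%N by rewrite mulnC modnMDl modn_small.
case: ltnP => Hi3; first by rewrite ev_pvar xvE.
have -> : i = 3%N by apply/eqP; rewrite eqn_leq Hi3 -ltnS Hi.
have xv0 : xv (3 * m) = vof m 0 (inord 0) by rewrite -xvE ?addn0.
by rewrite ev_popp !ev_padd !ev_pvar xv0 !xvE // vof3.
Qed.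

Lemma admN_lt p m : admN p = Some m -> (m < 3)%N.
Proof. by rewrite /admN; (repeat case: ifP => _) => //; case=> <-. Qed.

Lemma nidN_lt i j : nidN i = Some j -> (j < 4)%N.
Proof.
rewrite /nidN; case: ifP => // /andP [H2 H5] [<-].
by rewrite ltn_subLR.
Qed.

Lemma admatE (r : 'I_7) :
  admat (diag_mx a) (diag_mx b) (diag_mx c) r = omap (fun m => diag_mx (vof m)) (admN r).
Proof.
rewrite /admat /admN /vof /=.
by case: (nat_of_ord r == 6%N); case: (nat_of_ord r == 0%N); case: (nat_of_ord r == 1%N).
Qed.

Lemma nidxE (r : 'I_7) : nidx r = omap (fun i => inord i) (nidN r).
Proof. by rewrite /nidx /nidN; case: ifP. Qed.

Lemma diag_ok m i j : (m < 3)%N -> (i < 4)%N -> (j < 4)%N ->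
  diag_mx (vof m) (inord i) (inord j) = ev (if i == j then entP m i else [::]).
Proof.
move=> Hm Hi Hj; rewrite mxE.
have -> : (inord i == inord j :> 'I_4) = (i == j).
  by rewrite -(inj_eq val_inj) /= !inordK.
by case: eqP => _; rewrite ?mulr1n ?ent_ok ?mulr0n ?ev_nil.
Qed.

Lemma diagN_ok m i j : (m < 3)%N -> (i < 4)%N -> (j < 4)%N ->
  - diag_mx (vof m) (inord i) (inord j) = ev (if i == j then popp (entP m i) else [::]).
Proof.
move=> Hm Hi Hj; rewrite diag_ok //.
by case: ifP => _; rewrite ?ev_popp ?ev_nil ?oppr0.
Qed.

Lemma str_ok : forall k p q : 'I_7,
  structc (diag_mx a) (diag_mx b) (diag_mx c) k p q = ev (cP k p q).
Proof.
move=> k p q; rewrite /structc /cP !admatE !nidxE.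
case Ep: (admN p) => [m|] /=; case Eq: (nidN q) => [j|] /=; case Ek: (nidN k) => [i|] /=;
  try (by apply: diag_ok; [exact: admN_lt Ep | exact: nidN_lt Ek | exact: nidN_lt Eq]);
  (case Eq': (admN q) => [m'|] /=; case Ep': (nidN p) => [j'|] /=; rewrite ?ev_nil //).
all: apply: diagN_ok; first [exact: admN_lt Eq' | exact: nidN_lt Ek | exact: nidN_lt Ep'].
Qed.

Lemma lam_ok n : (n < 4)%N ->
  ev (lamP n) = (a 0 (inord 0) + a 0 (inord n)) ^+ 2 + (b 0 (inord 0) + b 0 (inord n)) ^+ 2
                + (c 0 (inord 0) + c 0 (inord n)) ^+ 2.
Proof.
move=> Hn; rewrite /lamP /sqP !(ev_padd, ev_pmul) !ent_ok //.

Qed.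

End Final.

Unset Implicit Arguments.
Set Strict Implicit.

Theorem corollary4p11 (R : realFieldType) (a b c : 'rV[R]_4) :
  \tr (diag_mx a) = 0 -> \tr (diag_mx b) = 0 -> \tr (diag_mx c) = 0 ->
  let str := structc (diag_mx a) (diag_mx b) (diag_mx c) in
  let a_ := fun n : nat => a 0 (inord n.-1) in
  let b_ := fun n : nat => b 0 (inord n.-1) in
  let c_ := fun n : nat => c 0 (inord n.-1) in
  let l7 := (a_ 1 + a_ 2) ^+ 2 + (b_ 1 + b_ 2) ^+ 2 + (c_ 1 + c_ 2) ^+ 2 in
  let l1 := (a_ 1 + a_ 3) ^+ 2 + (b_ 1 + b_ 3) ^+ 2 + (c_ 1 + c_ 3) ^+ 2 in
  let l2 := (a_ 1 + a_ 4) ^+ 2 + (b_ 1 + b_ 4) ^+ 2 + (c_ 1 + c_ 4) ^+ 2 in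
  laplacian str (G2phi R) =
    fscale l7 (wedge (omega7 R) (eb R 7)) + fscale l1 (wedge (omega1 R) (eb R 1))
    + fscale l2 (wedge (omega2 R) (eb R 2))
  /\
  laplacian str (G2psi R) =
    fscale l7 (wedge (omega7 R) (w2 R 1 2)) + fscale l1 (wedge (omega1 R) (w2 R 2 7))
    - fscale l2 (wedge (omega2 R) (w2 R 1 7)).
Proof.
move=> Ha Hb Hc str a_ b_ c_ l7 l1 l2.
have Hs : forall k p q : 'I_7, str k p q = ev (xv a b c) (cP k p q) := str_ok Ha Hb Hc.
pose x := xv a b c.
have Heb : forall n, (0 < n <= 7)%N -> rep x (ebT n) (eb R n) by move=> n Hn; apply: rep_eb.
have Hw2 : forall i j, (0 < i <= 7)%N -> (0 < j <= 7)%N -> rep x (w2T i j) (w2 R i j).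
  by move=> i j Hi Hj; apply: rep_wedge; apply: Heb.
have Hw3 : forall i j k, (0 < i <= 7)%N -> (0 < j <= 7)%N -> (0 < k <= 7)%N ->
    rep x (w3T i j k) (w3 R i j k).
  by move=> i j k Hi Hj Hk; apply: rep_wedge; [apply: Heb | apply: rep_wedge; apply: Heb].
have Hphi : rep x phiT (G2phi R).
  rewrite /phiT /G2phi.
  by repeat first [apply: rep_sub | apply: rep_add | apply: Hw3].
have Hpsi : rep x psiT (G2psi R) by apply: rep_hodge.
have Hom7 : rep x om7T (omega7 R) by apply: rep_add; apply: Hw2.
have Hom1 : rep x om1T (omega1 R) by apply: rep_sub; apply: Hw2.
have Hom2 : rep x om2T (omega2 R) by apply: rep_sub; [apply: rep_opp|]; apply: Hw2.
have Hl7 : l7 = ev x (lamP 1) by rewrite lam_ok.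
have Hl1 : l1 = ev x (lamP 2) by rewrite lam_ok.
have Hl2 : l2 = ev x (lamP 3) by rewrite lam_ok.
split; apply/ffunP => S.
  rewrite (rep_lap Hs Hphi S) (@treeEq_ok R a b c _ _ check1).
  have H : rep x rhs1T (fscale l7 (wedge (omega7 R) (eb R 7)) + fscale l1 (wedge (omega1 R) (eb R 1))
    + fscale l2 (wedge (omega2 R) (eb R 2))).
    apply: rep_add; [apply: rep_add|].
    - by apply: (rep_fsc Hl7); apply: rep_wedge; [exact: Hom7 | apply: Heb].
    - by apply: (rep_fsc Hl1); apply: rep_wedge; [exact: Hom1 | apply: Heb].
    - by apply: (rep_fsc Hl2); apply: rep_wedge; [exact: Hom2 | apply: Heb].
  by rewrite H.
rewrite (rep_lap Hs Hpsi S) (@treeEq_ok R a b c _ _ check2).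
have H : rep x rhs2T (fscale l7 (wedge (omega7 R) (w2 R 1 2)) + fscale l1 (wedge (omega1 R) (w2 R 2 7))
    - fscale l2 (wedge (omega2 R) (w2 R 1 7))).
  apply: rep_sub; [apply: rep_add|].
  - by apply: (rep_fsc Hl7); apply: rep_wedge; [exact: Hom7 | apply: Hw2].
  - by apply: (rep_fsc Hl1); apply: rep_wedge; [exact: Hom1 | apply: Hw2].
  - by apply: (rep_fsc Hl2); apply: rep_wedge; [exact: Hom2 | apply: Hw2].
by rewrite H.
Qed.
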